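(* Let $d\ge2$, $j\in[d-1]$, $j\le k\le d$, and $R$ an abelian group with at least two elements. If in a simplicial complex $\mathcal G$ on $[n]$ the 4-tuple $(K,C,w,a)$ forms a copy of $\hat M_{j,k}$, then $H^j(\mathcal G;R)\neq0$.
   Context: $H^j(\mathcal G;R)$ is the $j$-th simplicial cohomology group with coefficients in $R$. A $(j+2)$-set is a $j$-shell in $\mathcal G$ if all its $(j+1)$-subsets are $j$-simplices ($i$-simplices being members of size $i+1$). For $j+1\le k\le d$, $(K,C,w,a)$ is a copy of $\hat M_{j,k}$ if $K$ is a $k$-simplex of $\mathcal G$; $C\subset K$ with $|C|=j$ such that every simplex of $\mathcal G$ containing some set $C\cup\{x\}$, $x\in K\setminus C$, is contained in $K$; $w\in K\setminus C$ and $a\in[n]\setminus K$ with $C\cup\{w,a\}$ a $j$-shell. For $k=j$: $(K,C,w,a)$ is a copy of $\hat M_{j,j}$ if $K$ is an isolated $j$-simplex (contained in no other simplex of $\mathcal G$), $a\in[n]\setminus K$ with $K\cup\{a\}$ a $j$-shell, $C$ is the set of first $j$ vertices of $K$ and $w$ the last vertex of $K$ in increasing order on $[n]$. *)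

(* Defs.v *)
From HB Require Import structures.
From mathcomp Require Import all_boot all_order all_algebra.
Set Implicit Arguments. Unset Strict Implicit. Unset Printing Implicit Defensive.
Import GRing.Theory.
Local Open Scope ring_scope.

Definition simplicial_complex (n : nat) (G : {set {set 'I_n}}) : Prop :=
  forall s t : {set 'I_n}, s \in G -> t \subset s -> t \in G.

Definition is_simplex (n : nat) (G : {set {set 'I_n}}) (i : nat) (s : {set 'I_n}) : Prop :=
  s \in G /\ #|s| = i.+1.

Definition is_shell (n : nat) (G : {set {set 'I_n}}) (j : nat) (S : {set 'I_n}) : Prop :=
  #|S| = j.+2 /\ forall T : {set 'I_n}, T \subset S -> #|T| = j.+1 -> T \in G.

(* Simplicial cochains with coefficients in R: functions on sets of vertices
   (only their values on simplices of the relevant dimension matter).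
   Simplices are oriented by the increasing order of [n]; the sign of vertex x
   in s is (-1)^(number of vertices of s smaller than x). *)
Definition sgn_at (R : zmodType) (b : nat) (v : R) : R := if odd b then - v else v.

Definition coboundary (R : zmodType) (n : nat) (f : {set 'I_n} -> R)
  (s : {set 'I_n}) : R :=
  \sum_(x in s) sgn_at #|[set y in s | (y < x)%N]| (f (s :\ x)).

Definition cocycle (R : zmodType) (n : nat) (G : {set {set 'I_n}}) (j : nat)
  (f : {set 'I_n} -> R) : Prop :=
  forall s, is_simplex G j.+1 s -> coboundary f s = 0.

Definition cobound (R : zmodType) (n : nat) (G : {set {set 'I_n}}) (j : nat)
  (f : {set 'I_n} -> R) : Prop :=
  exists g : {set 'I_n} -> R, forall s, is_simplex G j s -> f s = coboundary g s.

Definition cohom_nonzero (R : zmodType) (n : nat) (G : {set {set 'I_n}}) (j : nat) : Prop :=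
  exists f : {set 'I_n} -> R, cocycle G j f /\ ~ cobound G j f.

Definition copy_Mhat (n : nat) (G : {set {set 'I_n}}) (j k : nat)
  (K C : {set 'I_n}) (w a : 'I_n) : Prop :=
  if (j < k)%N then
    is_simplex G k K /\ C \subset K /\ #|C| = j /\
    (forall x, x \in K :\: C ->
       forall s, s \in G -> C :|: [set x] \subset s -> s \subset K) /\
    w \in K :\: C /\ a \notin K /\ is_shell G j (C :|: [set w; a])
  else if k == j then
    is_simplex G j K /\
    (forall s, s \in G -> K \subset s -> s = K) /\
    a \notin K /\ is_shell G j (K :|: [set a]) /\
    w \in K /\ (forall y, y \in K -> (y <= w)%N) /\ C = K :\ w
  else False.

(* Main.v *)
Require Import Defs.
From HB Require Import structures.
From mathcomp Require Import all_boot all_order all_algebra.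
Set Implicit Arguments. Unset Strict Implicit. Unset Printing Implicit Defensive.
Import GRing.Theory.

Section Aux.
Local Open Scope ring_scope.
Variable R : zmodType.

Lemma sgn_atS b (v : R) : sgn_at b.+1 v = - sgn_at b v.
Proof. by rewrite /sgn_at /=; case: (odd b); rewrite ?opprK. Qed.

Lemma sgn_atD b c (v : R) : sgn_at (b + c) v = sgn_at b (sgn_at c v).
Proof. by rewrite /sgn_at oddD; case: (odd b); case: (odd c); rewrite /= ?opprK. Qed.

Lemma sgn_at_sum b I (r : seq I) (P : pred I) (F : I -> R) :
  sgn_at b (\sum_(i <- r | P i) F i) = \sum_(i <- r | P i) sgn_at b (F i).
Proof. by rewrite /sgn_at; case: (odd b) => //; rewrite sumrN. Qed.

Lemma sgn_at_eq0 b (v : R) : (sgn_at b v == 0) = (v == 0).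
Proof. by rewrite /sgn_at; case: (odd b); rewrite ?oppr_eq0. Qed.

Lemma sgn_at0 b : sgn_at b (0 : R) = 0.
Proof. by rewrite /sgn_at; case: odd; rewrite ?oppr0. Qed.

Variable n : nat.
Definition cnt (A : {set 'I_n}) (x : 'I_n) := #|[set y in A | (y < x)%N]|.

Lemma cnt_lt (S : {set 'I_n}) (x y : 'I_n) : y \in S -> (y < x)%N ->
  cnt (S :\ x) y = cnt S y /\ cnt S x = (cnt (S :\ y) x).+1.
Proof.
move=> yS yx; split.
  rewrite /cnt; apply: eq_card => z; rewrite !inE.
  case: (ltnP z y) => zy; rewrite ?andbF ?andbT //.
  have -> : z != x by apply/eqP => zx; move: (ltn_trans zy yx); rewrite zx ltnn.
  done.
rewrite /cnt (_ : [set z in S | (z < x)%N] = y |: [set z in S :\ y | (z < x)%N]).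
  by rewrite cardsU1 !inE eqxx.
apply/setP => z; rewrite !inE.
by case: (eqVneq z y) => [->|]; rewrite ?yS ?yx.
Qed.

Lemma dd0 (g : {set 'I_n} -> R) S : coboundary (coboundary g) S = 0.
Proof.
pose F x y := sgn_at (cnt S x + cnt (S :\ x) y) (g (S :\ x :\ y)).
pose B x y := if [&& x \in S, y \in S & (y < x)%N] then F x y else 0.
have antiF x y : x \in S -> y \in S -> (y < x)%N -> F y x = - F x y.
  move=> xS yS yx; have [h1 h2] := cnt_lt yS yx.
  rewrite /F h1 h2 addSn sgn_atS addnC.
  by rewrite (_ : S :\ x :\ y = S :\ y :\ x) ?opprK // !setDDl setUC.
have -> : coboundary (coboundary g) S = \sum_x \sum_y (B x y - B y x).
  rewrite /coboundary big_mkcond; apply: eq_bigr => x _ /=.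
  case: ifP => xS; last first.
    by rewrite big1 // => y _; rewrite /B xS /= andbF subr0.
  rewrite sgn_at_sum big_mkcond; apply: eq_bigr => y _.
  rewrite -sgn_atD (_ : sgn_at _ _ = F x y) // /B xS !inE.
  case: (ltngtP y x) => [yx|xy|e].
  - have neq : (y != x) by apply: contraTneq yx => ->; rewrite ltnn.
    by rewrite neq /=; case yS: (y \in S); rewrite /= ?subr0.
  - have neq : (y != x) by apply: contraTneq xy => ->; rewrite ltnn.
    rewrite neq /= andbT; case yS: (y \in S); rewrite /= ?subr0 //.
    by rewrite sub0r (antiF y x yS xS xy).
  - by rewrite (val_inj e) eqxx /= !andbF subr0.
rewrite (eq_bigr (fun x => \sum_y B x y - \sum_y B y x)); last by move=> x _; rewrite sumrB.
by rewrite sumrB exchange_big subrr.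
Qed.

Lemma shell_not_cobound (G : {set {set 'I_n}}) j S x0 (f : {set 'I_n} -> R) :
  is_shell G j S -> x0 \in S -> f (S :\ x0) != 0 ->
  (forall x, x \in S -> x != x0 -> f (S :\ x) = 0) -> ~ cobound G j f.
Proof.
move=> [cS sh] x0S fx0 f0 [g hg].
have e : coboundary f S = coboundary (coboundary g) S.
  apply: eq_bigr => x xS; congr sgn_at.
  have cx : #|S :\ x| = j.+1 by move: cS; rewrite (cardsD1 x) xS add1n => -[].
  apply: hg; split => //; apply: sh => //; exact: subD1set.
move: e; rewrite dd0 /coboundary (bigD1 x0) //= big1 ?addr0.
  by move/eqP; rewrite sgn_at_eq0 (negbTE fx0).
by move=> x /andP[xS xne]; rewrite f0 // sgn_at0.
Qed.

End Aux.

Theorem corollary4p9 (d j k n : nat) (R : zmodType)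
  (G : {set {set 'I_n}}) (K C : {set 'I_n}) (w a : 'I_n) :
  (2 <= d)%N -> (1 <= j)%N -> (j <= d - 1)%N -> (j <= k)%N -> (k <= d)%N ->
  (exists x y : R, x <> y) ->
  simplicial_complex G ->
  copy_Mhat G j k K C w a ->
  cohom_nonzero R G j.
Proof.
move=> _ _ _ _ _ [x1 [x2 x12]] _.
pose r := (x1 - x2)%R.
have r0 : r != 0%R by rewrite subr_eq0; apply/eqP.
rewrite /copy_Mhat; case: ifP => jk.
  move=> [[KG cK] [CK [cC [star [wKC [aK sh]]]]]].
  pose h := fun U : {set 'I_n} => if U == C then r else 0%R.
  pose f := fun T : {set 'I_n} => if T \subset K then coboundary h T else 0%R.
  exists f; split.
    move=> s [sG cs]; case sK: (s \subset K).
      rewrite -(dd0 h s); apply: eq_bigr => x xs.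
      by rewrite /f (subset_trans (subD1set s x) sK).
    apply: big1 => x xs; rewrite /f; case: ifP => sxK; last by rewrite sgn_at0.
    rewrite /coboundary big1 ?sgn_at0 // => y ys; rewrite /h.
    case: eqP => hC; last by rewrite sgn_at0.
    have yK : y \in K := subsetP sxK y ys.
    have yC : y \notin C by rewrite -hC !inE eqxx.
    have : s \subset K.
      apply: (star y _ s sG); first by rewrite inE yC yK.
      rewrite -hC subUset sub1set (subset_trans (subD1set _ _) (subD1set _ _)).
      by move: ys; rewrite inE => /andP[_ ->].
    by rewrite sK.
  have aC : a \notin C by apply: contra aK => aC; exact: subsetP CK a aC.
  move: wKC; rewrite inE => /andP[wC wK].
  have wa : w != a by apply: contraNneq aK => <-.
  apply: (shell_not_cobound (x0 := a) sh); first by rewrite !inE eqxx !orbT.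
    have -> : (C :|: [set w; a]) :\ a = C :|: [set w].
      apply/setP => z; rewrite !inE; case: (eqVneq z a) => [->|] /=.
        by rewrite (negbTE aC) eq_sym (negbTE wa).
      by rewrite orbF.
    rewrite /f subUset CK sub1set wK /coboundary (bigD1 w) ?inE ?eqxx ?orbT //=.
    rewrite big1 ?addr0.
      rewrite sgn_at_eq0 /h (_ : (C :|: [set w]) :\ w = C) ?eqxx //.
      apply/setP => z; rewrite !inE; case: (eqVneq z w) => [->|] /=.
        by rewrite (negbTE wC).
      by rewrite orbF.
    move=> y /andP[yS yw]; rewrite /h; case: eqP => e; last by rewrite sgn_at0.
    by move: wC; rewrite -e !inE eq_sym yw eqxx orbT.
  move=> x xS xa; rewrite /f; case: ifP => // sub.
  have := subsetP sub a; rewrite !inE eq_sym xa eqxx !orbT (negbTE aK).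
  by move=> /(_ isT).
case: ifP => // /eqP kj; subst k.
move=> [[KG cK] [iso [aK [sh _]]]].
pose f := fun T : {set 'I_n} => if T == K then r else 0%R.
exists f; split.
  move=> s [sG cs]; apply: big1 => x xs; rewrite /f; case: eqP => e; last by rewrite sgn_at0.
  have := iso s sG; rewrite -e subD1set => /(_ isT) sK.
  by move: cs; rewrite sK e cK => /eqP; rewrite eqSS eqn_leq ltnn andbF.
apply: (shell_not_cobound (x0 := a) sh); first by rewrite !inE eqxx orbT.
  rewrite /f (_ : (K :|: [set a]) :\ a = K) ?eqxx //.
  apply/setP => z; rewrite !inE; case: (eqVneq z a) => [->|] /=.
    by rewrite (negbTE aK).
  by rewrite orbF.
move=> x xS xa; rewrite /f; case: eqP => // e.
by move: aK; rewrite -e !inE eq_sym xa eqxx orbT.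
Qed.
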